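(* Let $\Sigma$ be an alphabet with $|\Sigma|=m$, and let $\pi_1,\pi_2,\pi_3$ be three strings, each a permutation of the symbols of $\Sigma$ (each symbol appears exactly once). Then $$|\mathrm{lcs}(\pi_1,\pi_2)|\cdot|\mathrm{lcs}(\pi_2,\pi_3)|\cdot|\mathrm{lcs}(\pi_3,\pi_1)|\ge m.$$
   Context: $\mathrm{lcs}(x,y)$ denotes a longest common subsequence of strings $x$ and $y$. *)

(* Defs.v *)
From mathcomp Require Import all_boot.
Set Implicit Arguments. Unset Strict Implicit. Unset Printing Implicit Defensive.

(* Every subsequence of s
   is of the form mask b s with b a bit-mask of length size s, so this max
   ranges over a finite type. *)
Definition lcs_len (T : eqType) (s t : seq T) : nat :=
  \max_(b : (size s).-tuple bool | subseq (mask b s) t) size (mask b s).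

Definition is_perm_string (T : finType) (s : seq T) : Prop :=
  perm_eq s (enum T).

(* Main.v *)
Require Import Defs.
From mathcomp Require Import all_boot.
Set Implicit Arguments. Unset Strict Implicit. Unset Printing Implicit Defensive.

Section Aux.
Variable Sigma : finType.

Lemma sorted_index (p : seq Sigma) : uniq p ->
  sorted (fun u v => index u p < index v p) p.
Proof.
move=> Up; case E: p => [//|x0 p']; rewrite -E.
suff: sorted (fun u v => index u p < index v p) (mkseq (nth x0 p) (size p)) by rewrite mkseq_nth.
rewrite /mkseq sorted_map.
apply: (sub_in_sorted (P := fun i => i < size p)) (iota_ltn_sorted 0 (size p)).
  move=> i j Hi Hj; rewrite /relpre /= !index_uniq //.
by apply/allP => i; rewrite mem_iota.
Qed.

Lemma count_perm (p : seq Sigma) (S : {set Sigma}) :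
  perm_eq p (enum Sigma) -> count (mem S) p = #|S|.
Proof.
move/permP => H; rewrite H cardE -size_filter.
by rewrite enumT /enum_mem.
Qed.

Definition good (i j : Sigma -> nat) (x : Sigma) (S : {set Sigma}) : bool :=
  [&& x \in S, [forall u in S, forall v in S, (i u < i v) == (j u < j v)]
    & [forall u in S, i u <= i x]].

Definition F (i j : Sigma -> nat) (x : Sigma) : nat :=
  \max_(S : {set Sigma} | good i j x S) #|S|.

Lemma good1 i j x : good i j x [set x].
Proof.
apply/and3P; split; first by rewrite inE.
  by apply/forallP => u; apply/implyP; rewrite inE => /eqP ->;
     apply/forallP => v; apply/implyP; rewrite inE => /eqP ->; rewrite !ltnn.
by apply/forallP => u; apply/implyP; rewrite inE => /eqP ->.
Qed.

Lemma F_ge1 i j x : 0 < F i j x.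
Proof.
have := @leq_bigmax_cond _ (good i j x) (fun S : {set Sigma} => #|S|) _ (good1 i j x).
by rewrite cards1.
Qed.

Lemma F_wit i j x : exists2 S, good i j x S & #|S| = F i j x.
Proof.
have [|S HS E] := eq_bigmax_cond (fun S : {set Sigma} => #|S|) (A := good i j x).
  by apply/card_gt0P; exists [set x]; exact: good1.
by exists S => //; rewrite /F E.
Qed.

Lemma F_lt i j x y : i x < i y -> j x < j y -> F i j x < F i j y.
Proof.
move=> Hi Hj; have [S HS <-] := F_wit i j x.
case/and3P: HS => xS /forallP Hag /forallP Hle.
have Hle' : forall u, u \in S -> i u <= i x by move=> u uS; have := Hle u; rewrite uS.
have Hag' : forall u v, u \in S -> v \in S -> (i u < i v) = (j u < j v).
  move=> u v uS vS; have := Hag u; rewrite uS /= => /forallP/(_ v); rewrite vS /=.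
  by move/eqP.
have yS : y \notin S.
  by apply/negP => yS; have := Hle' y yS; rewrite leqNgt Hi.
have Hj' : forall u, u \in S -> j u <= j x.
  by move=> u uS; rewrite leqNgt -Hag' // -leqNgt Hle'.
have Hgood : good i j y (y |: S).
  apply/and3P; split; first by rewrite !inE eqxx.
    apply/forallP => u; apply/implyP; rewrite !inE => /orP [/eqP ->|uS];
    apply/forallP => v; apply/implyP; rewrite !inE => /orP [/eqP ->|vS].
    - by rewrite !ltnn.
    - rewrite ltnNge (leq_trans (Hle' v vS) (ltnW Hi)) ltnNge.
      by rewrite (leq_trans (Hj' v vS) (ltnW Hj)).
    - by rewrite (leq_ltn_trans (Hle' u uS) Hi) (leq_ltn_trans (Hj' u uS) Hj).
    - by rewrite Hag'.
  apply/forallP => u; apply/implyP; rewrite !inE => /orP [/eqP ->//|uS].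
  exact: (leq_trans (Hle' u uS) (ltnW Hi)).
have := @leq_bigmax_cond _ (good i j y) (fun S : {set Sigma} => #|S|) _ Hgood.
by rewrite cardsU1 yS.
Qed.

Lemma good_lcs (p q : seq Sigma) x S :
  perm_eq p (enum Sigma) -> perm_eq q (enum Sigma) ->
  good (index^~ p) (index^~ q) x S -> #|S| <= lcs_len p q.
Proof.
move=> Pp Pq /and3P [_ /forallP Hag _].
have Hag' : forall u v, u \in S -> v \in S -> (index u p < index v p) = (index u q < index v q).
  move=> u v uS vS; have := Hag u; rewrite uS /= => /forallP/(_ v); rewrite vS /=.
  by move/eqP.
have Up : uniq p by rewrite (perm_uniq Pp) enum_uniq.
have Uq : uniq q by rewrite (perm_uniq Pq) enum_uniq.
have inp : forall u, u \in p by move=> u; rewrite (perm_mem Pp) mem_enum.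
have inq : forall u, u \in q by move=> u; rewrite (perm_mem Pq) mem_enum.
set t := filter (mem S) q.
have tr : transitive (fun u v => index u p < index v p).
  by move=> b a c; apply: ltn_trans.
have E : filter (mem S) p = t.
  apply: (irr_sorted_eq tr).
  - by rewrite /irreflexive => a; exact: ltnn.
  - by apply: sorted_filter => //; apply: sorted_index.
  - apply: (sub_in_sorted (P := mem S) (e := fun u v => index u q < index v q)).
    + by move=> u v uS vS /=; rewrite Hag'.
    + by apply/allP => u; rewrite mem_filter => /andP [].
    + apply: sorted_filter; last by apply: sorted_index.
      by move=> b a c; apply: ltn_trans.
  - by move=> u; rewrite !mem_filter inp inq.
have sp : subseq t p by rewrite -E filter_subseq.
have sq : subseq t q by apply: filter_subseq.
have -> : #|S| = size t by rewrite size_filter count_perm.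
case/subseqP: sp => mb Hm Et.
have Hm' : size mb == size p by rewrite Hm.
have := @leq_bigmax_cond _ (fun b : (size p).-tuple bool => subseq (mask b p) q)
   (fun b : (size p).-tuple bool => size (mask b p)) (Tuple Hm').
by rewrite /= -Et; apply.
Qed.

Lemma F_le_lcs (p q : seq Sigma) x :
  perm_eq p (enum Sigma) -> perm_eq q (enum Sigma) ->
  F (index^~ p) (index^~ q) x <= lcs_len p q.
Proof.
move=> Pp Pq; have [S HS <-] := F_wit (index^~ p) (index^~ q) x.
exact: good_lcs HS.
Qed.

Lemma F_neq i j x y : i x != i y -> j x != j y -> (i x < i y) = (j x < j y) ->
  F i j x != F i j y.
Proof.
move=> Ni Nj E.
case Hi: (i x < i y).
  by rewrite neq_ltn F_lt // -E.
have Hi' : i y < i x by rewrite ltn_neqAle eq_sym Ni leqNgt Hi.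
have Hj' : j y < j x by rewrite ltn_neqAle eq_sym Nj leqNgt -E Hi.
by rewrite neq_ltn (F_lt Hi' Hj') orbT.
Qed.

Lemma count_bound (f g h : Sigma -> nat) A B C :
  (forall x, 0 < f x) -> (forall x, f x <= A) ->
  (forall x, 0 < g x) -> (forall x, g x <= B) ->
  (forall x, 0 < h x) -> (forall x, h x <= C) ->
  (forall x y, f x = f y -> g x = g y -> h x = h y -> x = y) ->
  #|Sigma| <= A * B * C.
Proof.
move=> f0 fA g0 gB h0 hC Inj.
have Hf : forall x, (f x).-1 < A by move=> x; rewrite prednK.
have Hg : forall x, (g x).-1 < B by move=> x; rewrite prednK.
have Hh : forall x, (h x).-1 < C by move=> x; rewrite prednK.
pose k := fun x => (Ordinal (Hf x), Ordinal (Hg x), Ordinal (Hh x)).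
have := @leq_card _ _ k.
rewrite !card_prod !card_ord; apply.
move=> x y [] E1 E2 E3; apply: Inj.
- by rewrite -(prednK (f0 x)) E1 prednK.
- by rewrite -(prednK (g0 x)) E2 prednK.
- by rewrite -(prednK (h0 x)) E3 prednK.
Qed.

End Aux.

Theorem mainTheorem4 (Sigma : finType) (m : nat) (p1 p2 p3 : seq Sigma) :
  #|Sigma| = m ->
  is_perm_string p1 -> is_perm_string p2 -> is_perm_string p3 ->
  lcs_len p1 p2 * lcs_len p2 p3 * lcs_len p3 p1 >= m.
Proof.
move=> <- P1 P2 P3.
have N : forall p : seq Sigma, perm_eq p (enum Sigma) -> forall x y, x != y -> index x p != index y p.
  move=> p Pp x y; apply: contra => /eqP E; apply/eqP.
  by apply: (index_inj x) E; rewrite (perm_mem Pp) mem_enum.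
apply: (count_bound (f := F (index^~ p1) (index^~ p2)) (g := F (index^~ p2) (index^~ p3))
                    (h := F (index^~ p3) (index^~ p1))).
- by move=> x; apply: F_ge1.
- by move=> x; apply: F_le_lcs.
- by move=> x; apply: F_ge1.
- by move=> x; apply: F_le_lcs.
- by move=> x; apply: F_ge1.
- by move=> x; apply: F_le_lcs.
move=> x y E1 E2 E3; apply/eqP; apply/negPn/negP => Nxy.
have F1 := @F_neq _ (index^~ p1) (index^~ p2) x y (N _ P1 _ _ Nxy) (N _ P2 _ _ Nxy).
have F2 := @F_neq _ (index^~ p2) (index^~ p3) x y (N _ P2 _ _ Nxy) (N _ P3 _ _ Nxy).
have F3 := @F_neq _ (index^~ p3) (index^~ p1) x y (N _ P3 _ _ Nxy) (N _ P1 _ _ Nxy).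
move: F1 F2 F3; rewrite E1 E2 E3 !eqxx.
case: (index x p1 < index y p1); case: (index x p2 < index y p2);
  case: (index x p3 < index y p3); by [move=> /(_ erefl) | move=> _ /(_ erefl) | move=> _ _ /(_ erefl)].
Qed.
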